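(* Let $\Sigma=(I,X,\mathcal U,\phi,Y,h)$ be a forward complete control system with outputs. If $\Sigma$ is OUAG and OCEP, then it is OULS.
   Context: Let $I\in\{\mathbb N_0,\mathbb R_0^+\}$. A forward complete control system with outputs $\Sigma=(I,X,\mathcal U,\phi,Y,h)$ consists of: a normed space $(X,\|\cdot\|_X)$; a vector space $U$ and a normed linear subspace $(\mathcal U,\|\cdot\|_{\mathcal U})$ of $\{u:I\to U\}$ such that for all $u\in\mathcal U,\tau\in I$, $u(\cdot+\tau)\in\mathcal U$ with $\|u(\cdot+\tau)\|_{\mathcal U}\le\|u\|_{\mathcal U}$, and for $t_2\ge t_1\ge 0$ the function $u|_{[t_1,t_2]}$ ($u$ on $[t_1,t_2]$, $0$ elsewhere) lies in $\mathcal U$ with norm $\le\|u\|_{\mathcal U}$; a map $\phi:I\times X\times\mathcal U\to X$ with $\phi(0,x,u)=x$, causality, and cocycle property $\phi(t+s,x,u)=\phi(s,\phi(t,x,u),u(t+\cdot))$; a normed space $Y$ and $h:X\times U\to Y$. Write $y(t,x,u)=h(\phi(t,x,u),u(t))$, $B_r=\{x:\|x\|_X<r\}$, $B_{r,\mathcal U}=\{u:\|u\|_{\mathcal U}<r\}$; $\mathcal K_\infty$ = unbounded continuous strictly increasing functions $\mathbb R_0^+\to\mathbb R_0^+$ vanishing at $0$. OUAG: $\exists\gamma\in\mathcal K_\infty$ such that for all $\varepsilon,r,s>0$ there is $\tau\in I$ with $\|y(t,x,u)\|_Y\le\varepsilon+\gamma(\|u\|_{\mathcal U})$ for all $x\in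 B_r,u\in B_{s,\mathcal U},t\ge\tau$. OCEP: for every $\tau\in I,\varepsilon>0$ there is $\delta>0$ such that $t\in I$, $t\le\tau$, $\|x\|_X\le\delta$, $\|u\|_{\mathcal U}\le\delta$ imply $\|y(t,x,u)\|_Y\le\varepsilon$. OULS: $\exists r>0,\sigma,\gamma\in\mathcal K_\infty$ with $\|y(t,x,u)\|_Y\le\sigma(\|x\|_X)+\gamma(\|u\|_{\mathcal U})$ for all $x\in B_r,u\in B_{r,\mathcal U},t\in I$ (equivalently: for every $\varepsilon>0$ there is $\delta>0$ such that $\|x\|_X\le\delta$, $\|u\|_{\mathcal U}\le\delta$ imply $\|y(t,x,u)\|_Y\le\varepsilon$ for all $t\in I$). *)

(* Defs.v *)
From HB Require Import structures.
From mathcomp Require Import all_boot all_order all_algebra.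
From mathcomp Require Import all_classical all_reals all_analysis.
Set Implicit Arguments. Unset Strict Implicit. Unset Printing Implicit Defensive.
Import Order.TTheory GRing.Theory Num.Theory.
Import numFieldNormedType.Exports.
Local Open Scope classical_set_scope.
Local Open Scope ring_scope.

Section Defs.
Variable R : realType.

Definition time_domain (I : set R) : Prop :=
  I = [set t | exists n : nat, t = n%:R] \/ I = [set t | 0 <= t].

Definition Kinf (f : R -> R) : Prop :=
  [/\ f 0 = 0,
      {within [set x | 0 <= x], continuous f},
      (forall a b, 0 <= a -> a < b -> f a < f b) &
      (forall M, exists s, 0 <= s /\ M < f s)].

(* Forward complete control system with outputs
   Sigma = (I, X, Ucal, phi, Y, h).
   - X, Y : real normed spaces; U : real vector space.
   - Ucal : a normed space together with an injective linear map
     ev : Ucal -> (I -> U) (functions represented on R, only their values on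
     I matter), i.e. Ucal is a normed linear subspace of {u : I -> U}.
   - phi : I x X x Ucal -> X (total: forward completeness). *)
Definition control_system (I : set R) (X : normedModType R) (U : lmodType R)
  (Uc : normedModType R) (ev : Uc -> R -> U) (phi : R -> X -> Uc -> X) : Prop :=
  time_domain I /\
   (forall (a : R) (u v : Uc) t, I t -> ev (a *: u + v) t = a *: ev u t + ev v t) /\
   (forall u v : Uc, (forall t, I t -> ev u t = ev v t) -> u = v) /\
   (forall (u : Uc) tau, I tau -> exists u' : Uc,
       (forall t, I t -> ev u' t = ev u (t + tau)) /\ `|u'| <= `|u|) /\
   (forall (u : Uc) t1 t2, 0 <= t1 -> t1 <= t2 -> exists u' : Uc,
       (forall t, I t -> ev u' t = if (t1 <= t) && (t <= t2) then ev u t else 0)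
       /\ `|u'| <= `|u|) /\
   (forall x u, phi 0 x u = x) /\
   (forall t x (u v : Uc), I t ->
       (forall s, I s -> s <= t -> ev u s = ev v s) -> phi t x u = phi t x v) /\
   (forall t s x (u u' : Uc), I t -> I s ->
       (forall r, I r -> ev u' r = ev u (t + r)) ->
       phi (t + s) x u = phi s (phi t x u) u').

Section Output.
Variables (I : set R) (X : normedModType R) (U : lmodType R)
  (Uc : normedModType R) (ev : Uc -> R -> U) (phi : R -> X -> Uc -> X)
  (Y : normedModType R) (h : X -> U -> Y).

Definition out (t : R) (x : X) (u : Uc) : Y := h (phi t x u) (ev u t).

Definition OUAG : Prop :=
  exists gamma, Kinf gamma /\
  forall eps r s, 0 < eps -> 0 < r -> 0 < s ->
  exists tau, I tau /\
  forall x u t, `|x| < r -> `|u| < s -> I t -> tau <= t ->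
    `|out t x u| <= eps + gamma `|u|.

Definition OCEP : Prop :=
  forall tau eps, I tau -> 0 < eps ->
  exists delta, 0 < delta /\
  forall t x u, I t -> t <= tau -> `|x| <= delta -> `|u| <= delta ->
    `|out t x u| <= eps.

Definition OULS : Prop :=
  exists r sigma gamma, [/\ 0 < r, Kinf sigma, Kinf gamma &
  forall x u t, `|x| < r -> `|u| < r -> I t ->
    `|out t x u| <= sigma `|x| + gamma `|u|].
End Output.
End Defs.

(* Main.v *)
Require Import Defs.
From HB Require Import structures.
From mathcomp Require Import all_boot all_order all_algebra.
From mathcomp Require Import all_classical all_reals all_analysis.
From mathcomp Require Import lra.
Import Order.TTheory GRing.Theory Num.Theory.
Import numFieldNormedType.Exports.
Local Open Scope classical_set_scope.
Local Open Scope ring_scope.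

Lemma Kinf_small (R : realType) (g : R -> R) : Kinf g ->
  forall e, 0 < e -> exists2 d, 0 < d & forall s, 0 <= s -> s <= d -> g s <= e.
Proof.
case=> g0 gc _ _ e e0.
have E : [set x : R | 0 <= x] = `[0, +oo[%classic.
  by apply/seteqP; split=> x; rewrite /= in_itv /= andbT.
move: gc; rewrite E => /continuous_within_itvcyP [_].
move/cvgrPdist_le/(_ e e0); rewrite /at_right near_withinE g0 => /nbhs_normP [d d0 Hd].
exists (d/2); first by rewrite divr_gt0.
move=> s; rewrite le_eqVlt => /predU1P [<- _|s0 sd]; first by rewrite g0 ltW.
have := Hd s; rewrite /= sub0r normrN gtr0_norm //.
move=> /(_ _ s0); rewrite sub0r normrN.
have sd2 : s < d by apply: (le_lt_trans sd); rewrite ltr_pdivrMr // ltr_pMr // ltr1n.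
by move=> /(_ sd2) /(le_trans (ler_norm _)).
Qed.

Lemma epsdelta (R : realType) (I : set R) (X : normedModType R)
  (U : lmodType R) (Uc : normedModType R) (ev : Uc -> R -> U)
  (phi : R -> X -> Uc -> X) (Y : normedModType R) (h : X -> U -> Y) :
  OUAG I ev phi h -> OCEP I ev phi h ->
  forall e, 0 < e -> exists2 d, 0 < d & forall x u t, `|x| <= d -> `|u| <= d -> I t ->
    `|out ev phi h t x u| <= e.
Proof.
move=> [g [Kg Hg]] Hc e e0.
have e2 : 0 < e / 2 by rewrite divr_gt0.
have [tau [Itau Htau]] := Hg (e/2) 1 1 e2 ltr01 ltr01.
have [d1 [d10 Hd1]] := Hc tau (e/2) Itau e2.
have [d2 d20 Hd2] := Kinf_small _ _ Kg _ e2.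
exists (Order.min (Order.min d1 d2) (1/2)).
  by rewrite !lt_min d10 d20 divr_gt0.
move=> x u t; rewrite !le_min => /andP[/andP[x1 x2] x3] /andP[/andP[u1 u2] u3] It.
have [tle|tgt] := leP t tau.
  by apply: (le_trans (Hd1 t x u It tle x1 u1)); lra.
have half1 : 1/2 < (1:R) by rewrite ltr_pdivrMr // mul1r ltr1n.
apply: (le_trans (Htau x u t (le_lt_trans x3 half1) (le_lt_trans u3 half1) It (ltW tgt))).
rewrite [X in _ <= X](splitr e) lerD2l; exact: Hd2.
Qed.

Section Coef.
Variable R : realType.
Definition cf (s m : R) : R := Order.min 1 (Order.max s 0 / m).

Lemma cf_ge0 s m : 0 < m -> 0 <= cf s m.
Proof.
move=> m0; rewrite /cf le_min ler01 /=; apply: divr_ge0; last exact: ltW.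
by rewrite le_max lexx orbT.
Qed.

Lemma cf_le1 s m : cf s m <= 1.
Proof. by rewrite /cf ge_min; apply/orP; left. Qed.

Lemma cf_neg s m : s <= 0 -> cf s m = 0.
Proof.
move=> s0; rewrite /cf (max_r s0) mul0r; apply/min_idPr; exact: ler01.
Qed.

Lemma cf_one s m : 0 < m -> m <= s -> cf s m = 1.
Proof.
move=> m0 ms; rewrite /cf; apply/min_idPl.
have s0 : 0 <= s by apply: le_trans (ltW m0) ms.
by rewrite (max_l s0) ler_pdivlMr // mul1r.
Qed.

Lemma cf_le s m : 0 < m -> 0 <= s -> cf s m <= s / m.
Proof.
move=> m0 s0; by rewrite /cf (max_l s0) ge_min; apply/orP; right.
Qed.

Lemma cf_mono s s' m : 0 < m -> s <= s' -> cf s m <= cf s' m.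
Proof.
move=> m0 ss; rewrite /cf le_min; apply/andP; split.
  by rewrite ge_min; apply/orP; left.
rewrite ge_min; apply/orP; right.
rewrite ler_pM2r ?invr_gt0 //.
rewrite ge_max; apply/andP; split; last by rewrite le_max; apply/orP; right.
have [s0|s0] := leP s 0; first by rewrite le_max; apply/orP; right.
rewrite le_max; apply/orP; left; exact: ss.
Qed.

Lemma cf_ratio s s' m : 0 < m -> 0 < s -> s <= s' -> cf s' m <= cf s m + (s' - s) / s.
Proof.
move=> m0 s0 ss.
have [ms|sm] := leP m s.
  rewrite (@cf_one s m m0 ms); apply: (le_trans (cf_le1 _ _)).
  by rewrite lerDl divr_ge0 // ?subr_ge0 // ltW.
have s'0 : 0 <= s' by apply: le_trans (ltW s0) ss.
rewrite /cf (max_l (ltW s0)) (max_l s'0).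
have -> : Order.min 1 (s / m) = s / m.
  by apply/min_idPr; rewrite ler_pdivrMr // mul1r ltW.
rewrite ge_min; apply/orP; right.
have -> : s' / m = s / m + (s' - s) / m by rewrite -mulrDl addrCA subrr addr0.
rewrite lerD2l; apply: ler_wpM2l; first by rewrite subr_ge0.
by rewrite lef_pV2 ?posrE // ltW.
Qed.
End Coef.
Arguments cf {R}.
Arguments cf_ge0 {R}. Arguments cf_le1 {R}. Arguments cf_neg {R}. Arguments cf_one {R}. Arguments cf_le {R}. Arguments cf_mono {R}. Arguments cf_ratio {R}.

Lemma build (R : realType) (X Uc : normedModType R) (I : set R) (y : R -> X -> Uc -> R)
  (y0 : forall t x u, 0 <= y t x u)
  (P : forall e, 0 < e -> exists2 d, 0 < d & forall x u t, `|x| <= d -> `|u| <= d -> I t -> y t x u <= e) :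
  exists r sigma, [/\ 0 < r, Kinf sigma &
    forall x u t, `|x| < r -> `|u| < r -> I t -> y t x u <= sigma `|x| + sigma `|u|].
Proof.
have [r0 r00 Hr0] := P 1 ltr01.
pose m (x : X) (u : Uc) := Order.max `|x| `|u|.
pose E (s : R) := [set v : R | v = 0 \/ exists x u t, [/\ `|x| <= r0, `|u| <= r0, I t, 0 < m x u &
   v = y t x u * cf s (m x u)]].
pose k (s : R) := sup (E s).
have Ene s : E s !=set0 by exists 0; left.
have Eub s : ubound (E s) 1.
  move=> v [->|[x [u [t [xr ur It m0 ->]]]]]; first exact: ler01.
  apply: mulr_ile1 => //; [exact: cf_ge0 | exact: Hr0 | exact: cf_le1].
have hs s : has_sup (E s) by split; [exact: Ene | exists 1; exact: Eub].
have kle s v : E s v -> v <= k s by move=> Ev; exact: sup_upper_bound (hs s) _ Ev.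
have kub s b : (forall v, E s v -> v <= b) -> k s <= b by move=> H; exact: ge_sup (Ene s) H.
have k0 s : 0 <= k s by apply: kle; left.
have k1 s : k s <= 1 by apply: kub; exact: Eub.
have kneg s : s <= 0 -> k s = 0.
  move=> s0; apply/le_anti; rewrite k0 andbT; apply: kub.
  by move=> v [->|[x [u [t [_ _ _ _ ->]]]]]; rewrite ?cf_neg ?mulr0.
have kmaj x u t s : `|x| <= r0 -> `|u| <= r0 -> I t -> `|x| <= s -> `|u| <= s ->
    y t x u <= k s.
  move=> xr ur It xs us.
  have [mle|mgt] := leP (m x u) 0.
    have xy0 : y t x u <= 0.
      case: (leP (y t x u) 0) => // yp.
      have [d d0 Hd] := P (y t x u / 2) (divr_gt0 yp (ltr0Sn _ _)).
      have xd : `|x| <= d by apply: le_trans (ltW d0); apply: le_trans mle; rewrite le_max lexx.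
      have ud : `|u| <= d by apply: le_trans (ltW d0); apply: le_trans mle; rewrite le_max lexx orbT.
      have := Hd x u t xd ud It; lra.
    exact: le_trans xy0 (k0 s).
  have ms : m x u <= s by rewrite ge_max xs us.
  apply: kle; right; exists x, u, t; split => //.
  by rewrite (cf_one _ _ mgt ms) mulr1.
have kmono s s' : s <= s' -> k s <= k s'.
  move=> ss; apply: kub => v [->|[x [u [t [xr ur It m0 ->]]]]]; first exact: k0.
  apply: le_trans (kle s' (y t x u * cf s' (m x u)) _).
    by apply: ler_wpM2l => //; exact: cf_mono.
  by right; exists x, u, t.
have kr s s' c : 0 < s -> s <= s' -> s' - s <= c * s -> k s' <= k s + c.
  move=> s0 ss sc.
  have c0 : 0 <= c.
    by rewrite -(pmulr_lge0 _ s0); apply: le_trans sc; rewrite subr_ge0.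
  have qc : (s' - s) / s <= c by rewrite ler_pdivrMr.
  apply: kub => v [->|[x [u [t [xr ur It m0 ->]]]]].
    by apply: addr_ge0 => //; exact: k0.
  have yle1 := Hr0 x u t xr ur It.
  apply: (@le_trans _ _ (y t x u * (cf s (m x u) + (s' - s) / s))).
    by apply: ler_wpM2l => //; exact: cf_ratio.
  rewrite mulrDr; apply: lerD.
    by apply: kle; right; exists x, u, t.
  apply: le_trans qc; apply: ler_piMl => //.
  by apply: divr_ge0; [rewrite subr_ge0 | exact: ltW].
have klim e : 0 < e -> exists2 a, 0 < a & forall s, 0 <= s -> k s <= e + s / a.
  move=> e0; have [d d0 Hd] := P e e0; exists d => // s s0.
  have sd0 : 0 <= s / d by apply: divr_ge0 => //; exact: ltW.
  apply: kub => v [->|[x [u [t [xr ur It m0 ->]]]]].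
    by apply: addr_ge0 => //; exact: ltW.
  have yle1 := Hr0 x u t xr ur It.
  have [md|dm] := leP (m x u) d.
    have xd : `|x| <= d by apply: le_trans md; rewrite le_max lexx.
    have ud : `|u| <= d by apply: le_trans md; rewrite le_max lexx orbT.
    have ye := Hd x u t xd ud It.
    have : y t x u * cf s (m x u) <= y t x u.
      by apply: ler_piMr => //; exact: cf_le1.
    lra.
  have : y t x u * cf s (m x u) <= cf s (m x u).
    by apply: ler_piMl => //; exact: cf_ge0.
  have : cf s (m x u) <= s / m x u by exact: cf_le.
  have : s / m x u <= s / d.
    by apply: ler_wpM2l => //; rewrite lef_pV2 ?posrE // ltW.
  lra.
have kcont : continuous k.
  move=> s0; apply/cvgrPdist_le => e e0; apply/nbhs_normP.
  have [s0n|s0p] := leP s0 0.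
    have e2 : 0 < e / 2 by apply: divr_gt0.
    have [a a0 Ha] := klim _ e2.
    exists (e / 2 * a); first exact: mulr_gt0.
    move=> t /= dt; rewrite (kneg _ s0n) sub0r normrN ger0_norm; last exact: k0.
    have [tn|tp] := leP t 0; first by rewrite (kneg _ tn) ltW.
    apply: le_trans (Ha t (ltW tp)) _.
    have : t / a <= e / 2.
      rewrite ler_pdivrMr //; move: dt; rewrite ltr_norml => /andP[h1 h2]; lra.
    lra.
  pose d := Order.min (s0 / 2) (e * s0 / 2).
  have d0 : 0 < d by rewrite lt_min !divr_gt0 // mulr_gt0.
  have d1 : d <= s0 / 2 by rewrite ge_min lexx.
  have d2 : d <= e * s0 / 2 by rewrite ge_min lexx orbT.
  exists d => // t /=; rewrite ltr_norml => /andP[h1 h2].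
  have [st|ts] := leP s0 t.
    have H1 := kmono _ _ st.
    have H2 : k t <= k s0 + e by apply: kr => //; lra.
    rewrite ler_norml; apply/andP; split; lra.
  have tp : 0 < t by lra.
  have H1 := kmono _ _ (ltW ts).
  have het : e * (s0 / 2) <= e * t by apply: ler_wpM2l; [exact: ltW | lra].
  have H2 : k s0 <= k t + e by apply: kr => //; [exact: ltW | lra].
  rewrite ler_norml; apply/andP; split; lra.
pose sigma s := k s + s.
have scont : continuous sigma.
  by move=> s; apply: continuousD; [exact: kcont | exact: cvg_id].
exists r0, sigma; split => //.
  split.
  - by rewrite /sigma kneg // addr0.
  - exact: continuous_subspaceT.
  - move=> a b a0 ab; rewrite /sigma; apply: ler_ltD => //; apply: kmono; exact: ltW.
  - move=> M; exists (Order.max M 0 + 1); split.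
      by apply: addr_ge0 => //; rewrite le_max lexx orbT.
    have := k0 (Order.max M 0 + 1); have : M <= Order.max M 0 by rewrite le_max lexx.
    rewrite /sigma; lra.
move=> x u t xr ur It.
have sx : 0 <= sigma `|x| by rewrite /sigma; apply: addr_ge0 => //; exact: k0.
have su : 0 <= sigma `|u| by rewrite /sigma; apply: addr_ge0 => //; exact: k0.
have [xu|ux] := leP `|x| `|u|.
  have := kmaj x u t `|u| (ltW xr) (ltW ur) It xu (lexx _).
  have := normr_ge0 x; have := normr_ge0 u; move: sx su; rewrite /sigma; lra.
have := kmaj x u t `|x| (ltW xr) (ltW ur) It (lexx _) (ltW ux).
have := normr_ge0 x; have := normr_ge0 u; move: sx su; rewrite /sigma; lra.
Qed.

Theorem lemma6 (R : realType) (I : set R) (X : normedModType R)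
  (U : lmodType R) (Uc : normedModType R) (ev : Uc -> R -> U)
  (phi : R -> X -> Uc -> X) (Y : normedModType R) (h : X -> U -> Y) :
  control_system I ev phi ->
  OUAG I ev phi h -> OCEP I ev phi h -> OULS I ev phi h.
Proof.
move=> _ Hg Hc.
have P := @epsdelta R I X U Uc ev phi Y h Hg Hc.
have [r [sigma [r0 Ks H]]] := @build R X Uc I _ (fun t x u => normr_ge0 (out ev phi h t x u)) P.
by exists r, sigma, sigma; split.
Qed.
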